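(* For every $n\ge1$ there is a bijection $\sigma\mapsto\sigma'$ from $\mathcal{W}^*_{2n+1}$ onto $\mathcal{X}_{2n}$ such that $\mathrm{des}(\sigma')=\mathrm{des}(\sigma)$. In particular $\sum_{\sigma\in\mathcal{W}^*_{2n+1}}t^{\mathrm{des}(\sigma)}=\sum_{\sigma\in\mathcal{X}_{2n}}t^{\mathrm{des}(\sigma)}$.
   Context: For $\sigma\in\mathfrak{S}_m$ (permutations of $[m]$), a descent is an index $i$ with $\sigma_i>\sigma_{i+1}$, with descent pair $(\sigma_i,\sigma_{i+1})$; $\mathrm{des}(\sigma)$ is the number of descents. $\mathcal{X}_{2n}$ is the set of permutations of $[2n]$ whose every descent pair has even first entry and odd second entry. $\mathcal{W}^*_{2n+1}$ is the set of permutations of $[2n+1]$ whose every descent pair consists of two odd entries and whose last entry is odd. *)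

(* Defs.v *)
From mathcomp Require Import all_boot all_order all_algebra all_fingroup.
Set Implicit Arguments. Unset Strict Implicit. Unset Printing Implicit Defensive.

(* A permutation of [m] = {1..m} is represented by s : 'S_m (a permutation of
   'I_m = {0..m-1}); its one-line notation is sigma_1 ... sigma_m with
   sigma_(i+1) = (s i) + 1 (values shifted to {1..m}). *)
Definition oneline m (s : 'S_m) : seq nat := [seq (s i).+1 | i <- enum 'I_m].

Definition descent_pairs (w : seq nat) : seq (nat * nat) :=
  [seq p <- zip w (behead w) | p.2 < p.1].

Definition des m (s : 'S_m) : nat := size (descent_pairs (oneline s)).

Definition inX m (s : 'S_m) : bool :=
  all (fun p => ~~ odd p.1 && odd p.2) (descent_pairs (oneline s)).

Definition inWstar m (s : 'S_m) : bool :=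
  all (fun p => odd p.1 && odd p.2) (descent_pairs (oneline s))
  && odd (last 0 (oneline s)).

(* Main.v *)
Require Import Defs.
From mathcomp Require Import all_boot all_order all_algebra all_fingroup.
Set Implicit Arguments. Unset Strict Implicit. Unset Printing Implicit Defensive.

Definition ds (w : seq nat) := size (descent_pairs w).
Definition ob (w : seq nat) := count (fun p : nat * nat => odd p.2) (descent_pairs w).
Definition fam (b s : bool) (w : seq nat) :=
  all (fun p : nat * nat => odd p.1 == b) (descent_pairs w)
  && (s ==> (nilp w || (odd (last 0 w) == b))).
Definition ins (p : nat) (v : seq nat) := take p v ++ 1 :: drop p v.
Definition st (w : seq nat) := (ds w, ob w).
Definition cnt (b : bool) (v : seq nat) := count (fun x => odd x == b) v.

Lemma dp_nil : descent_pairs [::] = [::]. Proof. by []. Qed.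
Lemma dp1 x : descent_pairs [:: x] = [::]. Proof. by []. Qed.
Lemma dpcc x y u : descent_pairs [:: x, y & u] =
  (if y < x then [:: (x, y)] else [::]) ++ descent_pairs (y :: u).
Proof. by rewrite /descent_pairs /=; case: ifP. Qed.

Lemma famcc b s x y u : fam b s [:: x, y & u] =
  ((y < x) ==> (odd x == b)) && fam b s (y :: u).
Proof.
rewrite /fam dpcc all_cat /=; case: ifP => _ /=; last by [].
by rewrite andbT andbA.
Qed.

Lemma fam1 b s x : fam b s [:: x] = (s ==> (odd x == b)).
Proof. by []. Qed.

Lemma dscc x y u : ds [:: x, y & u] = (y < x) + ds (y :: u).
Proof. by rewrite /ds dpcc size_cat; case: ifP. Qed.
Lemma obcc x y u : ob [:: x, y & u] = ((y < x) && odd y) + ob (y :: u).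
Proof. by rewrite /ob dpcc count_cat; case: (y < x); rewrite /= ?addn0. Qed.

Lemma ob_le_ds w : ob w <= ds w.
Proof. exact: count_size. Qed.

From mathcomp Require Import zify.

Lemma dsc1 y u : 0 < y -> ds [:: 1, y & u] = ds (y :: u).
Proof. by move=> hy; rewrite dscc ltnNge hy. Qed.
Lemma obc1 y u : 0 < y -> ob [:: 1, y & u] = ob (y :: u).
Proof. by move=> hy; rewrite obcc ltnNge hy. Qed.
Lemma famc1 b s y u : 0 < y -> fam b s [:: 1, y & u] = fam b s (y :: u).
Proof. by move=> hy; rewrite famcc ltnNge hy. Qed.

Lemma cntcons b x u : cnt b (x :: u) = (odd x == b) + cnt b u.
Proof. by []. Qed.

Lemma ds_bound b s x w : fam b s (x :: w) -> ds (x :: w) + (s && ~~ b) <= cnt b (x :: w).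
Proof.
elim: w x => [|y u IH] x.
  rewrite fam1 /ds /cnt /=; case: s; case: b; case: (odd x) => //.
move=> H; move: (H); rewrite famcc => /andP[hxy /IH] {}IH.
rewrite dscc [cnt b (x :: _)]cntcons; move: hxy; case: (y < x) => /= [/eqP->|_]; rewrite ?eqxx /=; move: IH; case: (s && ~~ b) => /=; try lia;
case: (_ == _) => /=; lia.
Qed.

Fixpoint inss (v : seq nat) : seq (seq nat) :=
  if v is x :: v' then (1 :: v) :: map (cons x) (inss v') else [:: [:: 1]].

Lemma localS b s (a : pred (nat * nat)) x u : all (leq 2) (x :: u) ->
  count (fun w => fam b s w && a (st w)) (map (cons x) (inss u)) =
  if fam b s (x :: u) then
    ob (x::u) * a (ds (x::u), ob (x::u))
    + (ds (x::u) - ob (x::u)) * a (ds (x::u), (ob (x::u)).+1)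
    + (cnt b (x::u) - ds (x::u) - (s && ~~ b)) * a ((ds (x::u)).+1, (ob (x::u)).+1)
  else 0.
Proof.
elim: u x a => [|y u IH] x a.
  rewrite /= andbT => hx.
  have hx1 : 1 < x by [].
  rewrite /= famcc hx1 /= fam1 /st dscc obcc hx1 /ds /ob /cnt /= addn0.
  rewrite fam1 !addn0 !subn0; case: s; case: b; case: (odd x); case: (a (1, 1)) => //.
move=> hall0; have /and3P[hx hy hall] : [&& 2 <= x, 2 <= y & all (leq 2) u] := hall0.
have IHy := IH y _ (introT andP (conj hy hall)).
rewrite [inss _]/= map_cons [count _ (_ :: _)]/= -map_comp count_map.
pose c := (y < x) ==> (odd x == b).
pose a' := fun z : nat * nat => a (z.1 + (y < x), z.2 + ((y < x) && odd y)).
have -> : count (preim (cons x \o cons y) (fun w => fam b s w && a (st w))) (inss u) =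
   c * count (fun w => fam b s w && a' (st w)) (map (cons y) (inss u)).
  rewrite count_map /c /a' /=.
  case hc: ((y < x) ==> (odd x == b)) => /=.
    rewrite mul1n; apply: eq_count => w /=.
    by rewrite famcc hc /st /= dscc obcc [_ + (y < x)]addnC [_ + ((y < x) && _)]addnC.
  rewrite mul0n; apply/eqP; rewrite -leqn0 leqNgt -has_count; apply/hasP => -[w _] /=.
  by rewrite famcc hc.
rewrite IHy /a' /c.
rewrite famcc (famc1 _ _ _ (ltnW hy)).
rewrite [fam b s [:: x, y & u]]famcc.
have hx1 : 1 < x by [].
rewrite hx1 /=.
case hf: (fam b s (y :: u)); last by rewrite !andbF muln0.
have hb := ds_bound hf.
have hob := ob_le_ds (y :: u).
rewrite /st /= dscc obcc (dsc1 _ (ltnW hy)) (obc1 _ (ltnW hy)) hx1.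
change (cnt b (y :: u)) with ((odd y == b) + cnt b u) in hb.
rewrite dscc obcc andbT /=.
move: (ds (y :: u)) (ob (y :: u)) ((odd y == b) + cnt b u) (s && ~~ b) hb hob => D O C cc hb hob.
case: (y < x); case: (odd x == b); case: (odd y) => /=;
rewrite ?add0n ?addn0 ?add1n ?addn1 ?mul1n ?mul0n ?addn0;
repeat match goal with |- context [a ?z] => case: (a z) end; case: cc hb => /= hb; lia.
Qed.

Lemma localAll b s (a : pred (nat * nat)) v : v != [::] -> all (leq 2) v ->
  count (fun w => fam b s w && a (st w)) (inss v) =
  if fam b s v then
    (ob v).+1 * a (ds v, ob v)
    + (ds v - ob v) * a (ds v, (ob v).+1)
    + (cnt b v - ds v - (s && ~~ b)) * a ((ds v).+1, (ob v).+1)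
  else 0.
Proof.
case: v => [//|x u] _ hall.
rewrite [inss _]/= [count _ (_ :: _)]/= localS //.
have hx : 0 < x by move: hall => /andP[/ltnW].
rewrite famc1 // /st /= dsc1 // obc1 //.
case: (fam b s (x :: u)) => /=; last by [].
rewrite mulSn; lia.
Qed.

Definition shp (p : nat * nat) := (p.1.+1, p.2.+1).

Lemma dp_shift t : descent_pairs (map succn t) = map shp (descent_pairs t).
Proof.
elim: t => [|x [|y u] IH] //.
rewrite [map _ _]/= dpcc -[_.+1 :: map _ _]/(map succn (y :: u)) IH dpcc ltnS map_cat.
by case: (y < x).
Qed.

Lemma ds_shift t : ds (map succn t) = ds t.
Proof. by rewrite /ds dp_shift size_map. Qed.

Lemma ob_shift t : ob (map succn t) = ds t - ob t.
Proof.
rewrite /ob /ds dp_shift count_map -(count_predC (fun p : nat * nat => odd p.2)).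
by rewrite addKn; apply: eq_count => p /=.
Qed.

Lemma fam_shift b s t : fam b s (map succn t) = fam (~~ b) s t.
Proof.
rewrite /fam dp_shift all_map.
congr andb.
  by apply: eq_all => p /=; case: b; case: (odd p.1).
case: t => [//|x t] /=.
rewrite (last_map succn t x) /=.
by case: b; case: (odd (last x t)).
Qed.

Lemma cnt_shift b t : cnt b (map succn t) = cnt (~~ b) t.
Proof. by rewrite /cnt count_map; apply: eq_count => x /=; case: b; case: (odd x). Qed.

Lemma inss_perm v w : w \in inss v -> perm_eq w (1 :: v).
Proof.
elim: v w => [|x v IH] w /=; first by rewrite inE => /eqP->.
rewrite inE => /orP[/eqP->//|/mapP[w' /IH hw' ->]].
rewrite -(perm_cons x) in hw'.
apply: (perm_trans hw'); rewrite -[[:: x, 1 & v]]/([:: x] ++ [:: 1] ++ v).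
by rewrite (perm_catCA [:: x] [:: 1] v).
Qed.

Lemma inss_rem v w : 1 \notin v -> w \in inss v -> rem 1 w = v.
Proof.
elim: v w => [|x v IH] w /=; first by rewrite inE => _ /eqP->.
rewrite inE negb_or => /andP[hx hv].
rewrite inE => /orP[/eqP->|/mapP[w' hw' ->]] /=; first by rewrite ?eqxx.
by rewrite eq_sym (negbTE hx) IH.
Qed.

Lemma inss_mem w : 1 \in w -> w \in inss (rem 1 w).
Proof.
elim: w => [//|x w IH] h /=.
case: (eqVneq x 1) => [->|hx].
  by case: w {IH h} => [|y w'] //=; rewrite inE eqxx.
rewrite inE; apply/orP; right; apply: map_f; apply: IH.
by move: h; rewrite inE eq_sym (negbTE hx).
Qed.

Lemma inss_uniq v : 1 \notin v -> uniq (inss v).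
Proof.
elim: v => [//|x v IH] /=.
rewrite inE negb_or => /andP[hx hv].
rewrite map_inj_uniq; last by move=> a b [].
rewrite IH // andbT.
apply/mapP => -[w _ [h _]]; by rewrite h eqxx in hx.
Qed.

Lemma uniq_flatten_map (T U : eqType) (f : T -> seq U) (l : seq T) :
  uniq l -> (forall x, x \in l -> uniq (f x)) ->
  (forall x y z, x \in l -> y \in l -> z \in f x -> z \in f y -> x = y) ->
  uniq (flatten (map f l)).
Proof.
elim: l => [//|x l IH] /= /andP[hx hl] hu hd.
rewrite cat_uniq hu ?inE ?eqxx //= IH //; last first.
- by move=> a b z ha hb; apply: hd; rewrite inE ?ha ?hb orbT.
- by move=> a ha; apply: hu; rewrite inE ha orbT.
rewrite andbT; apply/hasP => -[z /flatten_mapP[y hy hzy] hzx].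
have exy : x = y by apply: (hd x y z) => //; rewrite ?inE ?eqxx ?hy ?orbT.
by rewrite exy hy in hx.
Qed.

Lemma iota_shift a k : map succn (iota a k) = iota a.+1 k.
Proof. by elim: k a => [//|k IH] a /=; rewrite IH. Qed.

Lemma map_pred_shift (l : seq nat) : all (leq 1) l -> map succn (map predn l) = l.
Proof. by elim: l => [//|x l IH] /= /andP[hx hl]; rewrite IH // prednK. Qed.

Lemma PERM k : perm_eq (permutations (iota 1 k.+1))
  (flatten [seq inss (map succn t) | t <- permutations (iota 1 k)]).
Proof.
apply: uniq_perm; first exact: permutations_uniq.
  apply: uniq_flatten_map; first exact: permutations_uniq.
    move=> t; rewrite mem_permutations => /perm_mem ht; apply: inss_uniq.
    apply/mapP => -[y]; rewrite ht mem_iota => /andP[]; case: y => //.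
  move=> t1 t2 z; rewrite !mem_permutations => /perm_mem h1 /perm_mem h2 hz1 hz2.
  have n1 : 1 \notin map succn t1.
    apply/mapP => -[y]; rewrite h1 mem_iota => /andP[]; case: y => //.
  have n2 : 1 \notin map succn t2.
    apply/mapP => -[y]; rewrite h2 mem_iota => /andP[]; case: y => //.
  apply: (inj_map succn_inj).
  by rewrite -(inss_rem n1 hz1) -(inss_rem n2 hz2).
move=> w; rewrite mem_permutations; apply/idP/flatten_mapP.
  move=> hw.
  have h1 : 1 \in w by rewrite (perm_mem hw) mem_iota.
  have hr : perm_eq (rem 1 w) (iota 2 k).
    by rewrite -(perm_cons 1) -(permPl (perm_to_rem h1)).
  have hall : all (leq 1) (rem 1 w).
    by apply/allP => x; rewrite (perm_mem hr) mem_iota => /andP[/ltnW].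
  exists (map predn (rem 1 w)).
    rewrite mem_permutations; apply: (perm_map_inj succn_inj).
    by rewrite map_pred_shift // iota_shift.
  by rewrite map_pred_shift //; apply: inss_mem.
move=> [t]; rewrite mem_permutations => ht /inss_perm hw.
apply: (perm_trans hw); rewrite /= perm_cons -iota_shift.
by apply: perm_map.
Qed.

Definition Ms b s m := [seq st w | w <- permutations (iota 1 m) & fam b s w].
Definition outc (c : nat) (z : nat * nat) : seq (nat * nat) :=
  nseq (z.1 - z.2).+1 (z.1, z.1 - z.2) ++ nseq z.2 (z.1, (z.1 - z.2).+1)
  ++ nseq (c - z.1) (z.1.+1, (z.1 - z.2).+1).

Lemma sumn_filter_map (T : Type) (f : T -> nat) (P : pred T) l :
  sumn [seq f x | x <- l & P x] = sumn [seq (if P x then f x else 0) | x <- l].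
Proof. by elim: l => [//|x l IH] /=; case: (P x) => /=; rewrite IH. Qed.

Lemma Ms_rec b s k : 0 < k ->
  perm_eq (Ms b s k.+1) (flatten (map (outc (cnt b (iota 2 k) - (s && ~~ b))) (Ms (~~ b) s k))).
Proof.
move=> hk; apply/seq.permP => a.
rewrite /Ms count_map count_filter (seq.permP (PERM k)) !count_flatten -!map_comp.
rewrite sumn_filter_map; congr sumn; apply/eq_in_map => t.
rewrite mem_permutations => ht /=.
have hv : map succn t != [::].
  by rewrite -size_eq0 size_map (perm_size ht) size_iota -lt0n.
have hall : all (leq 2) (map succn t).
  apply/allP => y /mapP[z]; rewrite (perm_mem ht) mem_iota => /andP[hz _] ->; exact: hz.
rewrite (eq_count (a2 := fun w => fam b s w && a (st w))); last first.
  by move=> w /=; rewrite andbC.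
rewrite localAll // fam_shift.
case: (fam (~~ b) s t) => //.
rewrite ds_shift ob_shift.
have -> : cnt b (map succn t) = cnt b (iota 2 k).
  by rewrite /cnt (seq.permP (perm_map succn ht)) iota_shift.
rewrite /outc /st /= !count_cat !count_nseq.
have ho := ob_le_ds t.
rewrite (subKn ho) subnAC.
rewrite mulSn !addnA; congr (_ + _ + _ + _); apply: mulnC.
Qed.

Lemma cnt_iota2 b a n : cnt b (iota a n.*2) = n.
Proof.
elim: n a => [//|n IH] a.
rewrite doubleS /= -/(cnt b _) IH; clear IH.
by case: b; case: (odd a).
Qed.

Lemma cnt_iota_odd b n : cnt b (iota 2 n.*2.+1) = n + (b == false).
Proof.
rewrite -[n.*2.+1]addn1 iotaD /cnt count_cat -/(cnt b _) cnt_iota2 /=.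
by rewrite add0n odd_double addn0; case: b.
Qed.

Lemma base0 : perm_eq (Ms true true 1) (Ms false false 0).
Proof. by vm_compute. Qed.
Lemma base1 : perm_eq (Ms false true 2) (Ms true false 1).
Proof. by vm_compute. Qed.

Lemma AB n : perm_eq (Ms true true n.*2.+1) (Ms false false n.*2)
          /\ perm_eq (Ms false true n.*2.+2) (Ms true false n.*2.+1).
Proof.
elim: n => [|n [_ IHB]]; first by split; [exact: base0 | exact: base1].
have HA : perm_eq (Ms true true (n.+1).*2.+1) (Ms false false (n.+1).*2).
  rewrite doubleS.
  eapply seq.perm_trans; first exact: (Ms_rec true true (ltn0Sn (n.*2.+1))).
  rewrite seq.perm_sym; eapply seq.perm_trans; first exact: (Ms_rec false false (ltn0Sn (n.*2))). rewrite seq.perm_sym.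
  rewrite -[n.*2.+2]/((n.+1).*2) cnt_iota2 cnt_iota_odd /= !subn0 addn1.
  by apply: perm_flatten; apply: perm_map.
split=> //.
rewrite doubleS.
eapply seq.perm_trans; first exact: (Ms_rec false true (ltn0Sn (n.*2.+2))).
rewrite seq.perm_sym; eapply seq.perm_trans; first exact: (Ms_rec true false (ltn0Sn (n.*2.+1))). rewrite seq.perm_sym.
rewrite -[n.*2.+2]/((n.+1).*2) cnt_iota2 cnt_iota_odd /= addn1 subn1 /=.
by apply: perm_flatten; apply: perm_map.
Qed.
Lemma oneline_inj m : injective (@oneline m).
Proof.
move=> s1 s2 h; apply/permP => i.
have /eq_in_map hh := h.
have := hh i (mem_enum _ i).
by move=> [] /val_inj.
Qed.

Lemma oneline_perm_eq m (s : 'S_m) : perm_eq (oneline s) (iota 1 m).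
Proof.
have -> : oneline s = map succn (map val (map s (enum 'I_m))).
  by rewrite /oneline -!map_comp.
have hp : perm_eq (map s (enum 'I_m)) (enum 'I_m).
  apply: uniq_perm; first by rewrite map_inj_uniq ?enum_uniq //; exact: perm_inj.
    exact: enum_uniq.
  move=> x; rewrite mem_enum; apply/mapP; exists (s^-1 x)%g; first by rewrite mem_enum.
  by rewrite permKV.
have := perm_map val hp; rewrite val_enum_ord => /(perm_map succn).
by rewrite -iota_shift.
Qed.

Lemma oneline_surj m w : perm_eq w (iota 1 m) -> exists s : 'S_m, oneline s = w.
Proof.
move=> hw.
have hsz : size w = m by rewrite (perm_size hw) size_iota.
have hu : uniq w by rewrite (perm_uniq hw) iota_uniq.
have hr : forall k, k < m -> 0 < nth 0 w k /\ (nth 0 w k).-1 < m.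
  move=> k hk; have : nth 0 w k \in iota 1 m by rewrite -(perm_mem hw) mem_nth ?hsz.
  rewrite mem_iota => /andP[h1 h2]; split=> //.
  by rewrite -ltnS prednK // -[m.+1]/(1 + m).
case: m hw hsz hr => [|m] hw hsz hr.
  exists 1%g; move: hsz; case: w {hw hu hr} => // _.
  by apply/nilP; rewrite /nilp size_map size_enum_ord.
pose g := fun i : 'I_m.+1 => (inord (nth 0 w i).-1 : 'I_m.+1).
have ginj : injective g.
  move=> i j /(congr1 (@nat_of_ord _)); rewrite /g !inordK; [|by case: (hr _ (ltn_ord j))|by case: (hr _ (ltn_ord i))].
  move=> h; apply/val_inj/eqP; rewrite -(nth_uniq 0 _ _ hu) ?hsz ?ltn_ord //.
  apply/eqP; case: (hr _ (ltn_ord i)) => hi _; case: (hr _ (ltn_ord j)) => hj _.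
  by rewrite -(prednK hi) -(prednK hj) h.
exists (perm ginj).
rewrite /oneline -[w in RHS](mkseq_nth 0) hsz /mkseq -val_enum_ord -map_comp.
apply: eq_map => i /=; rewrite permE /g inordK; last by case: (hr _ (ltn_ord i)).
by rewrite prednK //; case: (hr _ (ltn_ord i)).
Qed.

Lemma cardEcnt (T : finType) (A : pred T) : #|A| = count A (enum T).
Proof. by rewrite cardE enumT /enum_mem size_filter; apply: eq_count => x. Qed.

Lemma oneline_perm m : perm_eq (map (@oneline m) (enum 'S_m)) (permutations (iota 1 m)).
Proof.
apply: uniq_perm.
- by rewrite map_inj_uniq ?enum_uniq //; exact: oneline_inj.
- exact: permutations_uniq.
move=> w; rewrite mem_permutations; apply/mapP/idP.
  by move=> [s _ ->]; apply: oneline_perm_eq.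
by move=> /oneline_surj [s <-]; exists s; rewrite ?mem_enum.
Qed.

Lemma card_oneline m (P : pred (seq nat)) :
  #|[pred s : 'S_m | P (oneline s)]| = count P (permutations (iota 1 m)).
Proof. by rewrite cardEcnt -(seq.permP (oneline_perm m)) [RHS]count_map. Qed.

Lemma inWstarE m (s : 'S_m) : 0 < m ->
  inWstar s = fam true true (oneline s) && (ob (oneline s) == ds (oneline s)).
Proof.
move=> hm.
have hn : nilp (oneline s) = false.
  by rewrite /nilp /oneline size_map size_enum_ord; case: m hm s.
rewrite /inWstar /fam /ob /ds -all_count hn /= all_predI.
have -> : all (fun p : nat * nat => odd p.1 == true) (descent_pairs (oneline s)) =
          all (fun p : nat * nat => odd p.1) (descent_pairs (oneline s)).
  by apply: eq_all => p; rewrite eqb_id.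
by rewrite eqb_id andbAC.
Qed.

Lemma inXE m (s : 'S_m) :
  inX s = fam false false (oneline s) && (ob (oneline s) == ds (oneline s)).
Proof.
rewrite /inX /fam /ob /ds -all_count /= andbT all_predI.
congr andb; apply: eq_all => p /=; by case: (odd p.1).
Qed.

Lemma cardMs b s m (P : pred 'S_m) d :
  (forall t : 'S_m, P t = fam b s (oneline t) && (ob (oneline t) == ds (oneline t))) ->
  #|[pred t : 'S_m | P t && (des t == d)]| = count (pred1 (d, d)) (Ms b s m).
Proof.
move=> hP.
rewrite (eq_card (B := [pred t : 'S_m |
   (fun w => fam b s w && ((ds w, ob w) == (d, d))) (oneline t)])); last first.
  move=> t; rewrite !inE hP /des -/(ds _) xpair_eqE.
  case: (fam _ _ _) => //=.
  by case: (eqVneq (ds (oneline t)) d) => [->|hne]; rewrite ?andbT ?(negbTE hne) ?andbF.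
rewrite (@card_oneline m (fun w => fam b s w && ((ds w, ob w) == (d, d)))).
rewrite /Ms count_map count_filter; apply: eq_count => w /=.
by rewrite andbC.
Qed.

Lemma bij_card (T1 T2 : finType) (x2 : T2) (P : pred T1) (Q : pred T2)
    (h1 : T1 -> nat) (h2 : T2 -> nat) :
  (forall d, #|[pred s | P s && (h1 s == d)]| = #|[pred t | Q t && (h2 t == d)]|) ->
  exists f : T1 -> T2, [/\ {in P, forall s, Q (f s)}, {in P &, injective f},
     (forall t, Q t -> exists2 s, P s & f s = t) & {in P, forall s, h2 (f s) = h1 s}].
Proof.
move=> hc.
pose L1 d := enum [pred s | P s && (h1 s == d)].
pose L2 d := enum [pred t | Q t && (h2 t == d)].
have hs d : size (L1 d) = size (L2 d) by rewrite /L1 /L2 -!cardE hc.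
pose f s := nth x2 (L2 (h1 s)) (index s (L1 (h1 s))).
have memL1 s : P s -> s \in L1 (h1 s) by move=> Ps; rewrite mem_enum inE Ps eqxx.
have key s : P s -> f s \in L2 (h1 s).
  move=> Ps; apply: mem_nth; rewrite -hs index_mem; exact: memL1.
have keyQ s : P s -> Q (f s) && (h2 (f s) == h1 s).
  by move=> Ps; have := key s Ps; rewrite mem_enum.
exists f; split.
- by move=> s Ps; case/andP: (keyQ s Ps).
- move=> s1 s2 P1 P2 e.
  have d12 : h1 s1 = h1 s2.
    case/andP: (keyQ s1 P1) => _ /eqP <-; case/andP: (keyQ s2 P2) => _ /eqP <-.
    by rewrite e.
  move: e; rewrite /f d12 => e.
  have ei : index s1 (L1 (h1 s2)) = index s2 (L1 (h1 s2)).
    apply/eqP; rewrite -(@nth_uniq _ x2 (L2 (h1 s2))) ?e ?enum_uniq //.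
    + by rewrite -hs index_mem -d12; exact: memL1.
    + by rewrite -hs index_mem; exact: memL1.
  rewrite -(nth_index s1 (memL1 s2 P2)) -ei nth_index //.
  by rewrite -d12; exact: memL1.
- move=> t Qt.
  have tL : t \in L2 (h2 t) by rewrite mem_enum inE Qt eqxx.
  have hj : index t (L2 (h2 t)) < size (L1 (h2 t)) by rewrite hs index_mem.
  case E: (L1 (h2 t)) hj => [//|s0 l] hj.
  have sL : nth s0 (L1 (h2 t)) (index t (L2 (h2 t))) \in L1 (h2 t) by rewrite mem_nth // E.
  move: (sL); rewrite {1}mem_enum /= => /andP[Ps /eqP hd].
  exists (nth s0 (L1 (h2 t)) (index t (L2 (h2 t)))); first by [].
  rewrite /f hd index_uniq ?enum_uniq //; last by rewrite E.
  exact: nth_index.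
- by move=> s Ps; case/andP: (keyQ s Ps) => _ /eqP.
Qed.

Lemma sum_bij (T1 T2 : finType) (R : comNzRingType) (x : R) (P : pred T1) (Q : pred T2)
    (h1 : T1 -> nat) (h2 : T2 -> nat) (f : T1 -> T2) :
  {in P, forall s, Q (f s)} -> {in P &, injective f} ->
  (forall t, Q t -> exists2 s, P s & f s = t) -> {in P, forall s, h2 (f s) = h1 s} ->
  (\sum_(s | P s) x ^+ h1 s = \sum_(t | Q t) x ^+ h2 t)%R.
Proof.
move=> fQ finj fsurj fh.
case: (pickP P) => [s0 _|P0]; last first.
  rewrite big_pred0 // big_pred0 // => t; apply/negP => Qt.
  by have [s Ps _] := fsurj t Qt; rewrite P0 in Ps.
pose g t := odflt s0 [pick s | P s && (f s == t)].
rewrite [RHS](reindex_onto f g); last first.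
  move=> t Qt; rewrite /g; case: pickP => [s /andP[_ /eqP]|H] //=.
  by have [s Ps fs] := fsurj t Qt; move: (H s); rewrite Ps fs eqxx.
apply: eq_big => s; last by move=> Ps; rewrite fh.
case Ps: (P s).
  rewrite fQ //= /g; case: pickP => [s' /andP[Ps' /eqP e]|H] /=.
    by apply/esym/eqP; apply: (finj s' s).
  by move: (H s); rewrite Ps eqxx.
case Qf: (Q (f s)) => //=; rewrite /g; case: pickP => [s' /andP[Ps' _]|H] /=.
  by apply/esym/negP => /eqP e; rewrite e Ps in Ps'.
by have [s'' Ps'' e''] := fsurj _ Qf; move: (H s''); rewrite Ps'' e'' eqxx.
Qed.

Unset Implicit Arguments.
Local Open Scope ring_scope.

Theorem mainTheorem9 (n : nat) (hn : (1 <= n)%N) :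
  (exists f : 'S_(n.*2.+1) -> 'S_(n.*2),
      [/\ {in [pred s | inWstar s], forall s, inX (f s)},
          {in [pred s | inWstar s] &, injective f},
          (forall t, inX t -> exists2 s, inWstar s & f s = t) &
          {in [pred s | inWstar s], forall s, des (f s) = des s}])
  /\ (forall (R : comNzRingType) (t : R),
        \sum_(s : 'S_(n.*2.+1) | inWstar s) t ^+ des s
        = \sum_(s : 'S_(n.*2) | inX s) t ^+ des s).
Proof.
have hc : forall d, #|[pred s : 'S_(n.*2.+1) | inWstar s && (des s == d)]|
                  = #|[pred t : 'S_(n.*2) | inX t && (des t == d)]|.
  move=> d.
  rewrite (cardMs (b := true) (s := true)); last by move=> t; apply: inWstarE.
  rewrite (cardMs (b := false) (s := false)); last by move=> t; apply: inXE.
  by apply/seq.permP; case: (AB n).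
have [f [H1 H2 H3 H4]] := bij_card 1%g hc.
split; first by exists f; split.
by move=> R t; apply: sum_bij H1 H2 H3 H4.
Qed.
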